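(* Let $k,m\in\mathbb{N}$ with $k>m$, $\frac{2k+1}{4m}<1$ and $\gcd(4m,2k+1)=1$. For $s=0,\dots,4m-1$ and $n=0,\dots,2k$ put $\widetilde X_{sn}=\frac{s}{4m}-\frac{n}{2k+1}$, $\widetilde\Phi_{sn}(0,0)=\sum_{l\in\mathbb{Z}}Q_2\big(2(l+\widetilde X_{sn})\big)$ with $Q_2(x)=(1-|x|)\chi_{[-1,1]}(x)$, and $\widetilde A_{sn}=\widetilde\Phi_{sn}(0,0)-\widetilde\Phi_{s,2k+1-n}(0,0)$ for $n=1,\dots,k$. Then (i) $\widetilde A_{0n}=\widetilde A_{2m,n}=0$ for $n=1,\dots,k$; (ii) $\widetilde A_{s,n}=-\widetilde A_{4m-s,n}$ for $s=1,\dots,2m-1$ and $n=1,\dots,k$.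
   Context: This corresponds to the Gabor system of $Q_2$ with $a=\frac{1}{2m}$, $b=\frac{2k+1}{2}$, $ab=\frac{2k+1}{4m}$. *)

(* Defs.v *)
From Stdlib Require Import Reals ZArith Arith Lra Lia.
From Coquelicot Require Import Coquelicot.
Open Scope R_scope.

Definition Q2 (x : R) : R :=
  if Rle_dec (Rabs x) 1 then 1 - Rabs x else 0.

(* Sum over l in Z, as the series sum_{n>=0} (f n + f (-(n+1))). *)
Definition sumZ (f : Z -> R) : R :=
  Series (fun n : nat => f (Z.of_nat n) + f (- Z.of_nat (S n))%Z).

Definition Xt (k m s n : nat) : R :=
  INR s / (4 * INR m) - INR n / (2 * INR k + 1).

Definition Phi0 (k m s n : nat) : R :=
  sumZ (fun l => Q2 (2 * (IZR l + Xt k m s n))).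

Definition At (k m s n : nat) : R :=
  Phi0 k m s n - Phi0 k m s (2 * k + 1 - n).

(* Main.v *)
Require Import Defs.
From Stdlib Require Import Reals ZArith Arith Lra Lia.
From Coquelicot Require Import Coquelicot.
Open Scope R_scope.

Lemma sumZ_single (f : Z -> R) (l0 : Z) :
  (forall l, l <> l0 -> f l = 0) -> sumZ f = f l0.
Proof.
  intros Hf. unfold sumZ.
  set (a := fun n : nat => f (Z.of_nat n) + f (- Z.of_nat (S n))%Z).
  set (n0 := if Z.leb 0 l0 then Z.to_nat l0 else Z.to_nat (- l0 - 1)).
  assert (Ha : forall n, a n = if Nat.eqb n n0 then f l0 else 0).
  { intros n. unfold a. destruct (Nat.eqb_spec n n0) as [E|E].
    - subst n. unfold n0. destruct (Z.leb_spec 0 l0).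
      + rewrite (Hf (- Z.of_nat (S (Z.to_nat l0)))%Z) by lia.
        replace (Z.of_nat (Z.to_nat l0)) with l0 by lia. ring.
      + rewrite (Hf (Z.of_nat (Z.to_nat (- l0 - 1)))) by lia.
        replace (- Z.of_nat (S (Z.to_nat (- l0 - 1))))%Z with l0 by lia. ring.
    - unfold n0 in E. rewrite !Hf. ring.
      + destruct (Z.leb_spec 0 l0); lia.
      + destruct (Z.leb_spec 0 l0); lia. }
  assert (Hs : forall N, sum_n a N = if Nat.leb n0 N then f l0 else 0).
  { induction N.
    - rewrite sum_O, Ha. destruct (Nat.eqb_spec 0 n0); destruct (Nat.leb_spec n0 0); auto; lia.
    - rewrite sum_Sn, IHN, Ha.
      destruct (Nat.eqb_spec (S N) n0); destruct (Nat.leb_spec n0 N);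
        destruct (Nat.leb_spec n0 (S N)); try lia; cbn; ring. }
  apply is_series_unique.
  assert (L : is_lim_seq (sum_n a) (f l0)).
  2: exact L.
  apply (is_lim_seq_ext_loc (fun _ => f l0)).
  - exists n0. intros N HN. rewrite Hs. destruct (Nat.leb_spec n0 N); auto; lia.
  - apply is_lim_seq_const.
Qed.

Definition G (X : R) : R := sumZ (fun l => Q2 (2 * (IZR l + X))).

Lemma G_val (X : R) (l0 : Z) :
  -1/2 <= IZR l0 + X <= 1/2 -> G X = Q2 (2 * (IZR l0 + X)).
Proof.
  intros H. unfold G. apply (sumZ_single (fun l => Q2 (2 * (IZR l + X))) l0). intros l Hl. simpl.
  unfold Q2. destruct (Rle_dec (Rabs (2 * (IZR l + X))) 1) as [r|r]; auto.
  destruct (Z.lt_total l l0) as [L|[L|L]]; try contradiction.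
  - assert (IZR l <= IZR l0 - 1) by (rewrite <- minus_IZR; apply IZR_le; lia).
    rewrite Rabs_left1 in r |- *; lra.
  - assert (IZR l >= IZR l0 + 1) by (rewrite <- plus_IZR; apply IZR_ge; lia).
    rewrite Rabs_right in r |- *; lra.
Qed.

Lemma G_ex (X : R) : exists l0, -1/2 <= IZR l0 + X <= 1/2.
Proof.
  destruct (base_Int_part (X + 1/2)) as [H1 H2].
  exists (- Int_part (X + 1/2))%Z. rewrite opp_IZR. lra.
Qed.

Lemma G_even X : G (- X) = G X.
Proof.
  destruct (G_ex X) as [l0 H]. rewrite (G_val X l0 H).
  rewrite (G_val (-X) (- l0)%Z) by (rewrite opp_IZR; lra).
  unfold Q2. rewrite opp_IZR.
  replace (2 * (- IZR l0 + - X)) with (- (2 * (IZR l0 + X))) by ring.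
  rewrite Rabs_Ropp. reflexivity.
Qed.

Lemma G_shift X : G (X + 1) = G X.
Proof.
  destruct (G_ex X) as [l0 H]. rewrite (G_val X l0 H).
  rewrite (G_val (X + 1) (l0 - 1)%Z) by (rewrite minus_IZR; lra).
  rewrite minus_IZR. f_equal. ring.
Qed.

Lemma G_shiftm X : G (X - 1) = G X.
Proof. rewrite <- (G_shift (X - 1)). f_equal. ring. Qed.

Theorem lemma3p15 (k m : nat) :
  (m < k)%nat ->
  (2 * k + 1 < 4 * m)%nat ->
  Nat.gcd (4 * m) (2 * k + 1) = 1%nat ->
  (forall n : nat, (1 <= n <= k)%nat ->
     At k m 0 n = 0 /\ At k m (2 * m) n = 0) /\
  (forall s n : nat, (1 <= s <= 2 * m - 1)%nat -> (1 <= n <= k)%nat ->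
     At k m s n = - At k m (4 * m - s) n).
Proof.
  intros Hmk Hkm _.
  assert (Hm : 0 < INR m) by (apply lt_0_INR; lia).
  assert (Hk : 0 <= INR k) by apply pos_INR.
  assert (HN : forall n, (n <= k)%nat -> INR (2 * k + 1 - n) = 2 * INR k + 1 - INR n).
  { intros n Hn. rewrite minus_INR by lia. rewrite plus_INR, mult_INR. simpl. ring. }
  assert (Hx : forall s n, Xt k m s n = INR s / (4 * INR m) - INR n / (2 * INR k + 1))
    by reflexivity.
  unfold At, Phi0. fold (G (Xt k m 0 0)).
  split.
  - intros n Hn. split.
    + change (G (Xt k m 0 n) - G (Xt k m 0 (2 * k + 1 - n)) = 0).
      rewrite !Hx, HN by lia.
      replace (INR 0 / (4 * INR m) - (2 * INR k + 1 - INR n) / (2 * INR k + 1))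
        with (- (INR 0 / (4 * INR m) - INR n / (2 * INR k + 1)) - 1)
        by (simpl; field; lra).
      rewrite G_shiftm, G_even. ring.
    + change (G (Xt k m (2*m) n) - G (Xt k m (2*m) (2 * k + 1 - n)) = 0).
      rewrite !Hx, HN by lia.
      replace (INR (2 * m) / (4 * INR m) - (2 * INR k + 1 - INR n) / (2 * INR k + 1))
        with (- (INR (2 * m) / (4 * INR m) - INR n / (2 * INR k + 1)))
        by (rewrite mult_INR; simpl; field; lra).
      rewrite G_even. ring.
  - intros s n Hs Hn.
    change (G (Xt k m s n) - G (Xt k m s (2 * k + 1 - n)) =
            - (G (Xt k m (4*m-s) n) - G (Xt k m (4*m-s) (2 * k + 1 - n)))).
    rewrite !Hx, !HN by lia.
    assert (E : INR (4 * m - s) = 4 * INR m - INR s)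
      by (rewrite minus_INR by lia; rewrite mult_INR; simpl; ring).
    rewrite E.
    replace ((4 * INR m - INR s) / (4 * INR m) - INR n / (2 * INR k + 1))
      with (- (INR s / (4 * INR m) - (2 * INR k + 1 - INR n) / (2 * INR k + 1)))
      by (field; lra).
    replace ((4 * INR m - INR s) / (4 * INR m) - (2 * INR k + 1 - INR n) / (2 * INR k + 1))
      with (- (INR s / (4 * INR m) - INR n / (2 * INR k + 1)))
      by (field; lra).
    rewrite !G_even. ring.
Qed.
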